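(* Let $\boldsymbol{\Omega}_M=\boldsymbol{\Omega}^{(0)}\boldsymbol{\Omega}^{(0)\top}+\sum_{q=1}^Q\boldsymbol{\Omega}^{(q)}\boldsymbol{\Omega}^{(q)\top}$ and $\bar{\mathbf S}$ be as in the context. Then the $i$-th leading eigenvalue of $\boldsymbol{\Omega}_M$ satisfies $$\lambda_i(\boldsymbol{\Omega}_M)=\begin{cases}\|\boldsymbol\theta\|^2\|\boldsymbol\delta\|^2\,\lambda_i(\bar{\mathbf S}), & 1\le i\le K,\\ 0, & i>K.\end{cases}$$ Moreover, let $\bar{\mathbf S}=\mathbf J\boldsymbol\Sigma\mathbf J^\top$ be an eigenvalue decomposition of $\bar{\mathbf S}$ with $\mathbf J\in\mathbb R^{K\times K}$ orthogonal and $\boldsymbol\Sigma$ diagonal with entries in decreasing order. Then $\boldsymbol{\Omega}_M$ has the compact eigenvalue decomposition $\boldsymbol{\Omega}_M=\mathbf U\boldsymbol\Lambda\mathbf U^\top$ with $\boldsymbol\Lambda=\|\boldsymbol\theta\|^2\|\boldsymbol\delta\|^2\boldsymbol\Sigma$ and $\mathbf U\in\mathbb R^{n\times K}$ having orthonormal columns, whose $i$-th row is $$\mathbf U_{\bar i}=\frac{\theta_i}{\|\boldsymbol\theta^{(l_i)}\|}\,\mathbf J_{\bar{l_i}},\qquad 1\le i\le n,$$ where $\mathbf J_{\bar k}$ denotes the $k$-th row of $\mathbf J$. Finally, if $\|\boldsymbol\theta^{(k)}\|\asymp\|\boldsymbol\theta^{(k')}\|$ for all $k,k'\in\{1,\dots,K\}$,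 then $\|\mathbf U_{\bar i}\|\asymp\theta_i/\|\boldsymbol\theta\|$ uniformly in $i$.
   Context: Fix integers $K\ge2$, $K'\ge1$, $Q\ge1$. Primary nodes are $\{1,\dots,n\}$ with community labels $l_i\in\{1,\dots,K\}$, every community nonempty; bipartite nodes are $\{1,\dots,m\}$ with labels $r_j\in\{1,\dots,K'\}$ (the same labels for all $q$), every bipartite community nonempty. Parameters: $\boldsymbol\theta=(\theta_1,\dots,\theta_n)^\top\in(0,1]^n$, $\boldsymbol\delta=(\delta_1,\dots,\delta_m)^\top\in(0,1]^m$, a symmetric $\mathbf E\in[0,1]^{K\times K}$, and $\mathbf F^{(q)}\in[0,1]^{K\times K'}$ for $q=1,\dots,Q$. Define $\boldsymbol\Omega^{(0)}\in\mathbb R^{n\times n}$ by $\boldsymbol\Omega^{(0)}(i,j)=\theta_i\theta_j\mathbf E(l_i,l_j)$ and $\boldsymbol\Omega^{(q)}\in\mathbb R^{n\times m}$ by $\boldsymbol\Omega^{(q)}(i,j)=\theta_i\delta_j\mathbf F^{(q)}(l_i,r_j)$. Let $\boldsymbol\theta^{(k)}\in\mathbb R^n$ with $\theta^{(k)}_i=\theta_i\mathbb I(l_i=k)$, $\boldsymbol\delta^{(k')}\in\mathbb R^m$ with $\delta^{(k')}_j=\delta_j\mathbb I(r_j=k')$; $\boldsymbol\Psi_\theta=\mathrm{diag}(\|\boldsymbol\theta^{(k)}\|/\|\boldsymbol\theta\|)_{k=1}^K$, $\boldsymbol\Psi_\delta=\mathrm{diag}(\|\boldsymbol\delta^{(k')}\|/\|\boldsymbol\delta\|)_{k'=1}^{K'}$;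 $\mathbf S^{(0)}=\boldsymbol\Psi_\theta\mathbf E\boldsymbol\Psi_\theta$, $\mathbf S^{(q)}=\boldsymbol\Psi_\theta\mathbf F^{(q)}\boldsymbol\Psi_\delta$, and $\bar{\mathbf S}=(\|\boldsymbol\theta\|^2/\|\boldsymbol\delta\|^2)\mathbf S^{(0)}\mathbf S^{(0)\top}+\sum_{q=1}^Q\mathbf S^{(q)}\mathbf S^{(q)\top}$. Norms $\|\cdot\|$ are Euclidean. Eigenvalues of the positive semidefinite matrices $\boldsymbol\Omega_M$, $\bar{\mathbf S}$ are ordered decreasingly. For the last assertion, all quantities other than $K,K',Q$ may depend on $n$, and $a_n\asymp b_n$ means $b_n/C\le a_n\le Cb_n$ for a constant $C$ independent of $n$ and all large $n$. *)

(* Defs.v *)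
From HB Require Import structures.
From mathcomp Require Import all_boot all_order all_algebra.
From Stdlib Require Import ClassicalEpsilon.
Set Implicit Arguments. Unset Strict Implicit. Unset Printing Implicit Defensive.
Import Order.TTheory GRing.Theory Num.Theory.
Local Open Scope ring_scope.

Section Defs.
Variable R : rcfType.

Definition eigen_seq (p : nat) (A : 'M[R]_p) (s : seq R) : Prop :=
  sorted (fun x y : R => y <= x) s /\ char_poly A = \prod_(x <- s) ('X - x%:P).

(* The decreasingly ordered eigenvalue list (chosen; unique when it exists,
   which is the case for real symmetric matrices). *)
Definition eigvals (p : nat) (A : 'M[R]_p) : seq R :=
  epsilon (inhabits [::]) (eigen_seq A).

(* eigval A i = lambda_{i+1}(A)  (0-based index i; 0 past the dimension). *)
Definition eigval (p : nat) (A : 'M[R]_p) (i : nat) : R := nth 0 (eigvals A) i.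

Variables (K K' Q : nat).

Definition vnorm (p : nat) (v : 'I_p -> R) : R := Num.sqrt (\sum_i v i ^+ 2).

Definition blocknorm (p C : nat) (l : 'I_p -> 'I_C) (v : 'I_p -> R) (k : 'I_C) : R :=
  vnorm (fun i => if l i == k then v i else 0).

Definition Psi (p C : nat) (l : 'I_p -> 'I_C) (v : 'I_p -> R) : 'M[R]_C :=
  diag_mx (\row_k (blocknorm l v k / vnorm v)).

Section Model.
Variables (n m : nat) (l : 'I_n -> 'I_K) (r : 'I_m -> 'I_K')
  (theta : 'I_n -> R) (delta : 'I_m -> R)
  (E : 'M[R]_K) (F : 'I_Q -> 'M[R]_(K, K')).
(* the q-th bipartite matrix F^(q+1) is F q (0-based) *)

Definition Omega0 : 'M[R]_n :=
  \matrix_(i, j) (theta i * theta j * E (l i) (l j)).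

Definition OmegaQ (q : 'I_Q) : 'M[R]_(n, m) :=
  \matrix_(i, j) (theta i * delta j * F q (l i) (r j)).

Definition OmegaM : 'M[R]_n :=
  Omega0 *m Omega0^T + \sum_(q < Q) (OmegaQ q *m (OmegaQ q)^T).

Definition S0 : 'M[R]_K := Psi l theta *m E *m Psi l theta.

Definition SQ (q : 'I_Q) : 'M[R]_(K, K') := Psi l theta *m F q *m Psi r delta.

Definition Sbar : 'M[R]_K :=
  ((vnorm theta ^+ 2 / vnorm delta ^+ 2) *: (S0 *m S0^T))
  + \sum_(q < Q) (SQ q *m (SQ q)^T).

Definition Umat (J : 'M[R]_K) : 'M[R]_(n, K) :=
  \matrix_(i, k) (theta i / blocknorm l theta (l i) * J (l i) k).

Definition model_ok : Prop :=
  [/\ forall k : 'I_K, exists i, l i = k,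
      forall k : 'I_K', exists j, r j = k,
      forall i, 0 < theta i <= 1,
      forall j, 0 < delta j <= 1
    & [/\ E^T = E, forall a b, 0 <= E a b <= 1
         & forall q a b, 0 <= F q a b <= 1]].
End Model.

Definition evd (S J : 'M[R]_K) (sigma : 'rV[R]_K) : Prop :=
  [/\ J^T *m J = 1%:M,
      forall a b : 'I_K, (a <= b)%N -> sigma 0 b <= sigma 0 a
    & S = J *m diag_mx sigma *m J^T].

End Defs.

(* Main.v *)
Require Import Defs.
From HB Require Import structures.
From mathcomp Require Import all_boot all_order all_algebra.
From mathcomp Require Import complex.
From mathcomp Require Import ring lra.
From Stdlib Require Import ClassicalEpsilon.
Set Implicit Arguments. Unset Strict Implicit. Unset Printing Implicit Defensive.
Import Order.TTheory GRing.Theory Num.Theory.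
Local Open Scope ring_scope.
Lemma char_poly_mulmx (R : fieldType) n k (A : 'M[R]_(n, k)) (B : 'M[R]_(k, n)) :
  (k <= n)%N -> char_poly (A *m B) = 'X^(n - k) * char_poly (B *m A).
Proof.
move=> kn.
pose A' := map_mx polyC A; pose B' := map_mx polyC B.
have eAB : char_poly_mx (A *m B) = 'X%:M - A' *m B' by rewrite /char_poly_mx map_mxM.
have eBA : char_poly_mx (B *m A) = 'X%:M - B' *m A' by rewrite /char_poly_mx map_mxM.
pose M := block_mx ('X%:M : 'M_n) A' B' (1%:M : 'M_k).
have h1 : \det M = char_poly (A *m B).
  have -> : M = block_mx 1%:M A' 0 1%:M *m block_mx ('X%:M - A' *m B') 0 B' 1%:M.
    by rewrite mulmx_block !mul1mx !mul0mx !add0r mulmx1 subrK.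
  by rewrite det_mulmx det_ublock det_lblock !det1 !mul1r mulr1 /char_poly eAB.
have h2 : \det (block_mx (1%:M : 'M_n) 0 (- B') ('X%:M : 'M_k)) * \det M
          = 'X^n * char_poly (B *m A).
  rewrite -det_mulmx mulmx_block !mul1mx !mul0mx ?addr0 ?add0r ?mulmx1.
  rewrite mul_mx_scalar mul_scalar_mx scalerN addNr.
  rewrite det_ublock det_scalar /char_poly eBA; congr (_ * \det _).
  by rewrite mulNmx addrC.
move: h2; rewrite det_lblock det1 mul1r det_scalar h1.
have -> : ('X^n : {poly R}) = 'X^k * 'X^(n - k) by rewrite -exprD subnKC.
rewrite -mulrA.
move/(mulfI _); apply; by rewrite expf_neq0 // polyX_eq0.
Qed.
Lemma sym_split (R : rcfType) p (A : 'M[R]_p) : A^T = A ->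
  exists d : 'I_p -> R, forall c, char_poly (c *: A) = \prod_i ('X - (c * d i)%:P).
Proof.
move=> sA.
pose f := real_complex R.
pose AC := map_mx f A.
have hA : AC \is hermsymmx.
  apply/is_hermitianmxP; rewrite expr0 scale1r; apply/matrixP => i j.
  rewrite !mxE conj_Creal; first by rewrite -[in LHS]sA mxE.
  by apply/complex_realP; eexists.
have eA := orthomx_spectralP (hermitian_normalmx hA).
have /mxOverP Dr := hermitian_spectral_diag_real hA.
set P := spectralmx AC in eA; set D := spectral_diag AC in eA Dr.
have PU : P \in unitmx by apply: spectral_unit.
exists (fun i => complex.Re (D 0 i)) => c.
have fd : forall i, f (complex.Re (D 0 i)) = D 0 i.
  by move=> i; have /complex_realP [k ->] := Dr 0 i.
apply: (@map_poly_inj _ _ f).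
rewrite map_char_poly map_prod_XsubC map_mxZ -/AC eA.
have -> : f c *: (invmx P *m diag_mx D *m P) = invmx P *m (diag_mx (f c *: D) *m P).
  by rewrite -mulmxA scalemxAr scalemxAl linearZ.
rewrite char_poly_mulmx // subnn expr0 mul1r mulmxK //.
rewrite char_poly_trig ?diag_mx_is_trig //; apply: eq_bigr => i _.
by rewrite rmorphM !mxE eqxx mulr1n; congr (_ - (_ * _)%:P); exact/esym/fd.
Qed.
Section Gen.
Variable R : rcfType.

Lemma sum_if_l C (a : 'I_C) (x : R) (G : 'I_C -> R) :
  \sum_k (if a == k then x else 0) * G k = x * G a.
Proof.
rewrite (bigD1 a) //= eqxx big1 ?addr0 // => k /negbTE.
by rewrite eq_sym => ->; rewrite mul0r.
Qed.

Lemma sum_if_r C (a : 'I_C) (x : R) (G : 'I_C -> R) :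
  \sum_k G k * (if a == k then x else 0) = G a * x.
Proof. by rewrite mulrC -sum_if_l; apply: eq_bigr => k _; rewrite mulrC. Qed.

Lemma vnorm_sq q (w : 'I_q -> R) : vnorm w ^+ 2 = \sum_i w i ^+ 2.
Proof. by rewrite /vnorm sqr_sqrtr // sumr_ge0 // => i _; rewrite sqr_ge0. Qed.

Lemma vnorm_ge0 q (w : 'I_q -> R) : 0 <= vnorm w.
Proof. by rewrite /vnorm sqrtr_ge0. Qed.

Variables (p C : nat) (lab : 'I_p -> 'I_C) (v : 'I_p -> R).
Hypothesis (surj : forall k, exists i, lab i = k) (vpos : forall i, 0 < v i).

Lemma bn_sq k : blocknorm lab v k ^+ 2 = \sum_i (if lab i == k then v i ^+ 2 else 0).
Proof.
rewrite /blocknorm vnorm_sq; apply: eq_bigr => i _.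
by case: ifP => _ //; rewrite expr0n.
Qed.

Lemma bn_gt0 k : 0 < blocknorm lab v k.
Proof.
have [i0 hi0] := surj k.
rewrite /blocknorm /vnorm sqrtr_gt0 (bigD1 i0) //= hi0 eqxx.
rewrite ltr_pwDl ?exprn_gt0 ?vpos // ?sumr_ge0 // => i _; case: ifP => _; by rewrite ?sqr_ge0 ?expr0n.
Qed.

Lemma vnorm_bn : vnorm v ^+ 2 = \sum_k blocknorm lab v k ^+ 2.
Proof.
rewrite vnorm_sq (eq_bigr (fun k => \sum_i (if lab i == k then v i ^+ 2 else 0)));
  last by move=> k _; rewrite bn_sq.
rewrite exchange_big /=; apply: eq_bigr => i _.
rewrite (bigD1 (lab i)) //= eqxx big1 ?addr0 // => k /negbTE.
by rewrite eq_sym => ->.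
Qed.

Lemma vnorm_gt0 : (0 < C)%N -> 0 < vnorm v.
Proof.
case: C lab surj => // C' lab' surj' _.
have [i0 _] := surj' ord0.
rewrite /vnorm sqrtr_gt0 (bigD1 i0) //=.
rewrite ltr_pwDl ?exprn_gt0 ?vpos // sumr_ge0 // => i _; by rewrite sqr_ge0.
Qed.

Lemma bn_le k : blocknorm lab v k <= vnorm v.
Proof.
rewrite /blocknorm /vnorm; apply: ler_wsqrtr; apply: ler_sum => i _.
by case: ifP => _ //; rewrite expr0n sqr_ge0.
Qed.

Definition Nmat : 'M[R]_(p, C) :=
  \matrix_(i, k) (if lab i == k then v i / blocknorm lab v k else 0).

Lemma NtN : Nmat^T *m Nmat = 1%:M.
Proof.
apply/matrixP => a b; rewrite !mxE.
under eq_bigr => i _ do rewrite !mxE.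
case: eqP => [<-|/eqP ab] /=.
  rewrite (eq_bigr (fun i => (if lab i == a then v i ^+ 2 else 0) / blocknorm lab v a ^+ 2)).
    by rewrite -mulr_suml -bn_sq mulfV // expf_neq0 // gt_eqF // bn_gt0.
  move=> i _; case: ifP => _; last by rewrite mulr0 mul0r.
  by rewrite expr2 invfM mulrACA.
rewrite big1 // => i _.
case: (lab i =P a) => [ea|]; last by rewrite mul0r.
by rewrite ea (negbTE ab) mulr0.
Qed.

Definition Wmat : 'M[R]_(p, C) := \matrix_(i, k) (if lab i == k then v i else 0).

Lemma WmatE : (0 < C)%N -> Wmat = vnorm v *: (Nmat *m Psi lab v).
Proof.
move=> C0; apply/matrixP => i k; rewrite /Psi mul_mx_diag !mxE.
case: ifP => _; last by rewrite !mul0r mulr0.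
have h1 := bn_gt0 k; have h2 := vnorm_gt0 C0.
by field; rewrite ?gt_eqF.
Qed.

End Gen.
Lemma gram_mx (R : rcfType) n m C1 C2 (N1 : 'M[R]_(n, C1)) (N2 : 'M[R]_(m, C2))
  (P1 : 'M[R]_C1) (P2 : 'M[R]_C2) (G : 'M[R]_(C1, C2)) (t u : R) :
  N2^T *m N2 = 1%:M -> P1^T = P1 -> P2^T = P2 ->
  let X := (t *: (N1 *m P1)) *m G *m (u *: (N2 *m P2))^T in
  X *m X^T = (t ^+ 2 * u ^+ 2) *: (N1 *m ((P1 *m G *m P2) *m (P1 *m G *m P2)^T) *m N1^T).
Proof.
move=> hN h1 h2 X; rewrite /X.
rewrite !trmx_mul !linearZ /= !trmx_mul !trmxK h1 h2.
rewrite -!scalemxAl -!scalemxAr !scalerA; congr (_ *: _); first by ring.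
rewrite !mulmxA; congr (_ *m _); rewrite -!mulmxA; do 4 congr (_ *m _).
by rewrite !mulmxA hN mul1mx.
Qed.
Lemma prod_XsubC_perm (R : idomainType) (s t : seq R) :
  \prod_(x <- s) ('X - x%:P) = \prod_(x <- t) ('X - x%:P) -> perm_eq s t.
Proof.
elim: s t => [|a s IH] t.
  rewrite big_nil; case: t => [|b t] // h.
  by have := root_prod_XsubC (b :: t) b; rewrite -h mem_head /root hornerC oner_eq0.
rewrite big_cons => h.
have at_ : a \in t by rewrite -root_prod_XsubC -h rootM root_XsubC eqxx.
have pt := perm_to_rem at_.
have nz : ('X - a%:P) != 0 by rewrite polyXsubC_eq0.
move: h; rewrite (perm_big _ pt) big_cons => /(mulfI nz) /IH h.
by apply: (@perm_trans _ (a :: rem a t)); rewrite ?perm_cons // perm_sym.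
Qed.

Lemma eigvalsE (R : rcfType) p (A : 'M[R]_p) s : eigen_seq A s -> eigvals A = s.
Proof.
move=> hs; rewrite /eigvals.
have := epsilon_spec (inhabits [::]) (eigen_seq A) (ex_intro _ s hs).
case=> so e; case: hs => so' e'.
apply: (sorted_eq _ _ so so').
- by move=> y x z hxy hyz; apply: le_trans hyz hxy.
- by move=> x y /andP [h1 h2]; apply/le_anti; rewrite h1 h2.
by apply: prod_XsubC_perm; rewrite -e -e'.
Qed.
Lemma W_mid_W (R : rcfType) p q C1 C2 (l1 : 'I_p -> 'I_C1) (l2 : 'I_q -> 'I_C2) (v1 : 'I_p -> R) (v2 : 'I_q -> R)
  (G : 'M[R]_(C1, C2)) :
  \matrix_(i, j) (v1 i * v2 j * G (l1 i) (l2 j)) = Wmat l1 v1 *m G *m (Wmat l2 v2)^T.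
Proof.
apply/matrixP => i j; rewrite !mxE.
under eq_bigr => k' _ do rewrite !mxE.
under eq_bigr => k' _ do (under eq_bigr => k _ do rewrite mxE; rewrite sum_if_l).
by rewrite sum_if_r mulrAC.
Qed.

Lemma gram_ge0 (R : rcfType) K C (G : 'M[R]_(K, C)) (v : 'rV[R]_K) :
  0 <= (v *m (G *m G^T) *m v^T) 0 0.
Proof.
rewrite mulmxA -[_ *m G^T *m _]mulmxA -trmx_mul mxE sumr_ge0 // => j _.
by rewrite [X in _ * X]mxE -expr2 sqr_ge0.
Qed.

Lemma vvT_gt0 (R : rcfType) K (v : 'rV[R]_K) : v != 0 -> 0 < (v *m v^T) 0 0.
Proof.
move=> nz.
have hge : forall j : 'I_K, true -> 0 <= v 0 j * v^T j 0.
  by move=> j _; rewrite [X in _ * X]mxE -expr2 sqr_ge0.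
rewrite mxE lt_def sumr_ge0 ?andbT //.
apply: contra nz => /eqP h; apply/eqP/rowP => j; rewrite mxE.
have := psumr_eq0P hge h (i := j) isT; rewrite [X in _ * X]mxE -expr2 => /eqP.
by rewrite sqrf_eq0 => /eqP.
Qed.
Section Model2.
Variables (R : rcfType) (K K' Q n m : nat) (l : 'I_n -> 'I_K) (r : 'I_m -> 'I_K')
  (theta : 'I_n -> R) (delta : 'I_m -> R) (E : 'M[R]_K) (F : 'I_Q -> 'M[R]_(K, K')).
Hypotheses (sl : forall k, exists i, l i = k) (sr : forall k, exists j, r j = k)
  (tp : forall i, 0 < theta i) (dp : forall j, 0 < delta j)
  (K0 : (0 < K)%N) (K'0 : (0 < K')%N).



Let N := Nmat l theta.
Let t := vnorm theta.
Let u := vnorm delta.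

Lemma OmegaME : OmegaM l r theta delta E F = N *m ((t ^+ 2 * u ^+ 2) *: Sbar l r theta delta E F) *m N^T.
Proof.
have tp' : 0 < t by apply: (vnorm_gt0 sl).
have up' : 0 < u by apply: (vnorm_gt0 sr).
have hN := NtN sl tp; have hN' := NtN sr dp.
have hP1 : (Psi l theta)^T = Psi l theta by rewrite /Psi tr_diag_mx.
have hP2 : (Psi r delta)^T = Psi r delta by rewrite /Psi tr_diag_mx.
rewrite /OmegaM /Omega0 W_mid_W (WmatE sl tp K0).
rewrite gram_mx //.
rewrite /OmegaQ.
under eq_bigr => q _ do rewrite W_mid_W (WmatE sl tp K0) (WmatE sr dp K'0) gram_mx //.
rewrite /Sbar scalerDr mulmxDr mulmxDl scalerA.
rewrite /S0 /SQ -!scalemxAr -!scalemxAl; congr (_ + _).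
  congr (_ *: _); rewrite -/t -/u; field; by rewrite gt_eqF // exprn_gt0.
rewrite mulmx_sumr mulmx_suml scaler_sumr; apply: eq_bigr => q _.
by [].
Qed.

Lemma K_le_n : (K <= n)%N.
Proof.
have := leq_imset_card l 'I_n.
have -> : [set l i | i in 'I_n] = setT.
  by apply/setP => k; rewrite inE; have [i <-] := sl k; apply: imset_f.
by rewrite cardsT !card_ord.
Qed.

Let SB := Sbar l r theta delta E F.

Lemma Sbar_sym : SB^T = SB.
Proof.
rewrite /SB /Sbar linearD /= linearZ /= trmx_mul trmxK linear_sum /=; congr (_ + _).
by apply: eq_bigr => q _; rewrite trmx_mul trmxK.
Qed.

Lemma Sbar_psd (v : 'rV[R]_K) : 0 <= (v *m SB *m v^T) 0 0.
Proof.
rewrite /SB /Sbar mulmxDr mulmxDl mxE -scalemxAr -scalemxAl mxE.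
rewrite mulmx_sumr mulmx_suml summxE addr_ge0 ?mulr_ge0 ?gram_ge0 //.
all: try by rewrite ?invr_ge0 ?exprn_ge0 ?vnorm_ge0.
by apply: sumr_ge0 => q _; apply: gram_ge0.
Qed.

Lemma eig_ge0 x : root (char_poly SB) x -> 0 <= x.
Proof.
rewrite -eigenvalue_root_char => /eigenvalueP [v hv nz].
have := Sbar_psd v; rewrite hv -scalemxAl mxE.
by rewrite pmulr_lge0 // vvT_gt0.
Qed.

Lemma part1 : let c := vnorm theta ^+ 2 * vnorm delta ^+ 2 in
  (forall i : nat, (i < K)%N -> eigval (OmegaM l r theta delta E F) i = c * eigval SB i)
  /\ (forall i : nat, (K <= i)%N -> eigval (OmegaM l r theta delta E F) i = 0).
Proof.
move=> c.
have c0 : 0 <= c by rewrite mulr_ge0 // exprn_ge0 // vnorm_ge0.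
have [d hd] := sym_split Sbar_sym.
pose sd := [seq d i | i <- enum 'I_K].
have hprod : forall a, char_poly (a *: SB) = \prod_(x <- sd) ('X - (a * x)%:P).
  by move=> a; rewrite hd big_map big_enum.
have sd_ge0 : forall x, x \in sd -> 0 <= x.
  move=> x xs; apply: eig_ge0; rewrite -(scale1r SB) hprod.
  under eq_bigr do rewrite mul1r.
  by rewrite root_prod_XsubC.
pose ge := (fun x y : R => y <= x).
have ge_tr : transitive ge by move=> y x z hxy hyz; apply: le_trans hyz hxy.
have ge_tot : total ge by move=> x y; apply: le_total.
pose s := sort ge sd.
have ps : perm_eq sd s by rewrite perm_sym perm_sort.
have es : eigen_seq SB s.
  split; first exact: sort_sorted.
  rewrite -(scale1r SB) hprod (perm_big _ ps).
  by under eq_bigr do rewrite mul1r.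
pose so := [seq c * x | x <- s] ++ nseq (n - K) 0.
have eo : eigen_seq (OmegaM l r theta delta E F) so.
  split.
    rewrite sorted_pairwise // pairwise_cat; apply/and3P; split.
    - apply/allrelP => x y /mapP [x' x's ->]; rewrite mem_nseq => /andP [_ /eqP ->].
      by rewrite /ge mulr_ge0 // sd_ge0 // (perm_mem ps).
    - rewrite -sorted_pairwise //; apply: (homo_sorted (e := ge)); last exact: sort_sorted.
      by move=> x y; rewrite /ge => h; rewrite ler_wpM2l.
    - by elim: (n - K)%N => //= k ->; rewrite andbT all_nseq /ge lexx orbT.
  rewrite OmegaME -mulmxA char_poly_mulmx ?K_le_n // -mulmxA NtN // mulmx1.
  rewrite big_cat /= big_map -(perm_big _ ps) -hprod big_nseq mulrC; congr (_ * _).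
  by elim: (n - K)%N => //= k <-; rewrite subr0 exprS.
rewrite /eigval (eigvalsE eo) (eigvalsE es).
have ss : size s = K by rewrite size_sort size_map size_enum_ord.
split=> i hi.
  by rewrite nth_cat size_map ss hi (nth_map 0) // ss.
by rewrite nth_cat size_map ss ltnNge hi /= nth_nseq; case: ifP.
Qed.

Lemma UmatE (J : 'M[R]_K) : Umat l theta J = N *m J.
Proof.
apply/matrixP => i k; rewrite !mxE (bigD1 (l i)) //= !mxE eqxx big1 ?addr0 //.
by move=> k' /negbTE h; rewrite mxE eq_sym h mul0r.
Qed.

Lemma part2 (J : 'M[R]_K) (sigma : 'rV[R]_K) : evd SB J sigma ->
  let c := vnorm theta ^+ 2 * vnorm delta ^+ 2 in
  (Umat l theta J)^T *m Umat l theta J = 1%:M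
  /\ OmegaM l r theta delta E F
     = Umat l theta J *m diag_mx (c *: sigma) *m (Umat l theta J)^T.
Proof.
case=> hJ _ hS c; rewrite UmatE; split.
  by rewrite trmx_mul mulmxA -[J^T *m N^T *m N]mulmxA NtN // mulmx1 hJ.
rewrite OmegaME -/SB hS.
have -> : diag_mx (c *: sigma) = c *: diag_mx sigma.
  by apply/matrixP=> a b; rewrite !mxE mulrnAr.
by rewrite trmx_mul -!scalemxAr -!scalemxAl !mulmxA.
Qed.

End Model2.

Lemma part3_one (R : rcfType) K n (l : 'I_n -> 'I_K) (theta : 'I_n -> R) (J : 'M[R]_K) (C : R) :
  (forall k, exists i, l i = k) -> (forall i, 0 < theta i) -> J^T *m J = 1%:M -> 0 < C ->
  (forall k k' : 'I_K, blocknorm l theta k' / C <= blocknorm l theta k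
          /\ blocknorm l theta k <= C * blocknorm l theta k') ->
  forall i : 'I_n,
    let Ui := vnorm (fun k : 'I_K => Umat l theta J i k) in
    let b := theta i / vnorm theta in
    b / (K%:R * (C + 1)) <= Ui /\ Ui <= (K%:R * (C + 1)) * b.
Proof.
move=> sl tp hJ C0 hC i Ui b.
have hJ' := mulmx1C hJ.
set beta := blocknorm l theta (l i).
have be0 : 0 < beta by apply: bn_gt0.
have K0 : (0 < K)%N by case: (K) (l i) => [[]|].
have T0 : 0 < vnorm theta by apply: (vnorm_gt0 sl).
have x0 := tp i.
have eU : Ui = theta i / beta.
  rewrite /Ui /vnorm.
  under eq_bigr => k _ do rewrite mxE exprMn.
  rewrite -mulr_sumr.
  have -> : \sum_k J (l i) k ^+ 2 = 1.
    have /matrixP /(_ (l i) (l i)) := hJ'; rewrite !mxE eqxx /=. move=> h; apply: etrans h.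
    by apply: eq_bigr => k _; rewrite [X in _ * X]mxE expr2.
  by rewrite mulr1 sqrtr_sqr ger0_norm // divr_ge0 // ltW.
have kge1 : 1 <= (K%:R : R) by rewrite ler1n.
have bleT : beta <= vnorm theta by apply: (bn_le l theta).
have TleY : vnorm theta <= K%:R * (C + 1) * beta.
  have hT2 : vnorm theta ^+ 2 <= K%:R * (C * beta) ^+ 2.
    rewrite (vnorm_bn l theta) mulr_natl -[X in _ <= _ *+ X](card_ord K) -sumr_const.
    apply: ler_sum => k _.
    have [_ h] := hC k (l i).
    by rewrite ler_pM // ltW // bn_gt0.
  rewrite -ler_sqr ?nnegrE ?vnorm_ge0 //; last first.
    by rewrite mulr_ge0 // ?mulr_ge0 // ?ler0n // ltW // addr_gt0.
  apply: (le_trans hT2).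
  set X := C * beta.
  have X0 : 0 <= X by rewrite mulr_ge0 // ltW.
  have K0' : 0 <= (K%:R : R) by rewrite ler0n.
  apply: (@le_trans _ _ ((K%:R * X) ^+ 2)).
    rewrite [in X in _ <= X]exprMn; apply: ler_wpM2r; first by rewrite exprn_ge0.
    by rewrite expr2 ler_peMr.
  rewrite (ler_pXn2r (isT : (0 < 2)%N)) ?nnegrE.
  - rewrite -mulrA ler_wpM2l // /X; apply: ler_wpM2r; [exact: ltW | lra].
  - exact: mulr_ge0.
  - by apply: mulr_ge0; [apply: mulr_ge0 => //; lra | exact: ltW].
set Y := K%:R * (C + 1) in TleY *.
suff : b / Y <= theta i / beta /\ theta i / beta <= Y * b by rewrite eU.
have Y1 : 1 <= Y by rewrite /Y -[1]mulr1 ler_pM //; lra.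
have Y0 : 0 < Y by lra.
split.
  have TY0 : 0 < vnorm theta * Y by apply: mulr_gt0.
  rewrite /b -mulrA -invfM ler_pM2l // lef_pV2 ?posrE //.
  by apply: (le_trans bleT); rewrite ler_peMr // ltW.
have TY0 : 0 < vnorm theta / Y by apply: divr_gt0.
rewrite /b mulrCA -[Y / _]invf_div ler_pM2l // lef_pV2 ?posrE //.
by rewrite ler_pdivrMr // mulrC.
Qed.

Unset Implicit Arguments. Set Strict Implicit.

Theorem proposition1 (R : rcfType) (K K' Q : nat)
  (hK : (2 <= K)%N) (hK' : (1 <= K')%N) (hQ : (1 <= Q)%N) :
  (* Parts 1 and 2: for every fixed instance of the model *)
  (forall (n m : nat) (l : 'I_n -> 'I_K) (r : 'I_m -> 'I_K')
     (theta : 'I_n -> R) (delta : 'I_m -> R)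
     (E : 'M[R]_K) (F : 'I_Q -> 'M[R]_(K, K')),
     model_ok l r theta delta E F ->
     let c := vnorm theta ^+ 2 * vnorm delta ^+ 2 in
     (forall i : nat, (i < K)%N ->
        eigval (OmegaM l r theta delta E F) i
        = c * eigval (Sbar l r theta delta E F) i)
     /\ (forall i : nat, (K <= i)%N -> eigval (OmegaM l r theta delta E F) i = 0)
     /\ (forall (J : 'M[R]_K) (sigma : 'rV[R]_K),
           evd (Sbar l r theta delta E F) J sigma ->
           (Umat l theta J)^T *m Umat l theta J = 1%:M
           /\ OmegaM l r theta delta E F
              = Umat l theta J *m diag_mx (c *: sigma) *m (Umat l theta J)^T))
  /\
  (* Part 3: asymptotics, all quantities other than K, K', Q depending on n *)
  (forall (m : nat -> nat) (l : forall n : nat, 'I_n -> 'I_K)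
     (r : forall n : nat, 'I_(m n) -> 'I_K')
     (theta : forall n : nat, 'I_n -> R) (delta : forall n : nat, 'I_(m n) -> R)
     (E : nat -> 'M[R]_K) (F : nat -> 'I_Q -> 'M[R]_(K, K'))
     (J : nat -> 'M[R]_K) (sigma : nat -> 'rV[R]_K) (n0 : nat),
     (forall n, (n0 <= n)%N ->
        model_ok (l n) (r n) (theta n) (delta n) (E n) (F n)
        /\ evd (Sbar (l n) (r n) (theta n) (delta n) (E n) (F n)) (J n) (sigma n)) ->
     (exists C : R, 0 < C /\ exists N0 : nat, forall n, (N0 <= n)%N ->
        forall k k' : 'I_K,
          blocknorm (l n) (theta n) k' / C <= blocknorm (l n) (theta n) k
          /\ blocknorm (l n) (theta n) k <= C * blocknorm (l n) (theta n) k') ->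
     exists C : R, 0 < C /\ exists N0 : nat, forall n, (N0 <= n)%N ->
       forall i : 'I_n,
         let Ui := vnorm (fun k : 'I_K => Umat (l n) (theta n) (J n) i k) in
         let b := theta n i / vnorm (theta n) in
         b / C <= Ui /\ Ui <= C * b).
Proof.
split.
  move=> n m l r theta delta E F [sl sr htp hdp _] c.
  have tp : forall i, 0 < theta i by move=> i; case/andP: (htp i).
  have dp : forall j, 0 < delta j by move=> j; case/andP: (hdp j).
  have K0 : (0 < K)%N by apply: leq_trans hK.
  have [h1 h2] := part1 E F sl sr tp dp K0 hK'.
  split; first exact: h1.
  split; first exact: h2.
  move=> J sigma hev; exact: (part2 sl sr tp dp K0 hK' hev).
move=> mm l r theta delta E F J sigma n0 hyp [C [C0 [N0 hC]]].
exists (K%:R * (C + 1)); split.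
  by rewrite mulr_gt0 ?addr_gt0 // ltr0n; apply: leq_trans hK.
exists (maxn n0 N0) => n hn i.
have [hm he] := hyp n (leq_trans (leq_maxl _ _) hn).
case: hm => [sl _ htp _ _]; case: he => [hJ _ _].
have tp : forall i, 0 < theta n i by move=> j; case/andP: (htp j).
exact: (part3_one sl tp hJ C0 (hC n (leq_trans (leq_maxr _ _) hn)) i).
Qed.
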